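(* Let $p\in(p_c,1]$. Then $\mathcal{D}_{I^p}:=\{x\in\mathbb{R}^d:I^p(x)<\infty\}=\{x\in\mathbb{R}^d:\mu^p(x)\le1\}$, and $I^p(x)\le\log(2d)$ for all $x\in\mathcal{D}_{I^p}$.
   Context: Bond percolation on $\mathbb{Z}^d$ ($d\ge2$) with parameter $p>p_c$ ($p_c$ the critical probability), infinite cluster $\mathcal{C}_\infty$, chemical distance $d_\omega$. Simple random walk on open edges, travel cost $a_\lambda(x,y,\omega)=-\log E^x_\omega[e^{-\lambda H(y)}\mathbf 1\{H(y)<\infty\}]$. Lyapunov exponent $\alpha^p_\lambda$: the norm such that a.s. on $\{0\in\mathcal{C}_\infty\}$, $(a_\lambda(0,x,\omega)-\alpha^p_\lambda(x))/\|x\|_1\to0$ along $x\in\mathcal{C}_\infty$. Rate function $I^p(x)=\sup_{\lambda\ge0}(\alpha^p_\lambda(x)-\lambda)$. Time constant $\mu^p$: the norm with $d_\omega(0,kx)/k\to\mu^p(x)$ a.s. on $\{0\in\mathcal{C}_\infty\}$ along $k$ with $kx\in\mathcal{C}_\infty$. *)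

(* Defs.v *)
From HB Require Import structures.
From mathcomp Require Import all_boot all_order all_algebra.
From mathcomp Require Import all_classical all_reals all_analysis.
Unset Printing Implicit Defensive.
Import Order.TTheory GRing.Theory Num.Theory.
Local Open Scope classical_set_scope.
Local Open Scope ring_scope.

Definition vertex (d : nat) := 'rV[int]_d.
Definition unitv (d : nat) (i : 'I_d) : vertex d := delta_mx 0 i.
Arguments unitv {d}.
(* Nearest-neighbour edges of Z^d: the pair (x, i) encodes the edge {x, x+e_i}
   (each edge has exactly one such representation). *)
Definition edge (d : nat) := (vertex d * 'I_d)%type.
Definition config0 (d : nat) := edge d -> bool.
Definition cylinders (d : nat) : set (set (config0 d)) :=
  [set A | exists (e : edge d) (b : bool), A = [set w | w e = b]].
Definition config (d : nat) := g_sigma_algebraType (cylinders d).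

Definition bernoulli_perc (R : realType) (d : nat)
    (P : probability (config d) R) (p : R) : Prop :=
  forall (s : seq (edge d)) (b : edge d -> bool), uniq s ->
    P [set w : config d | forall e, e \in s -> w e = b e]
    = (\prod_(e <- s) (if b e then p else 1 - p))%:E.
Arguments bernoulli_perc {R d}.

Definition nbr (d : nat) (x : vertex d) (i : 'I_d) (s : bool) : vertex d :=
  if s then x + unitv i else x - unitv i.
Arguments nbr {d}.
Definition open_b (d : nat) (w : config d) (x : vertex d) (i : 'I_d) (s : bool) : bool :=
  if s then w (x, i) else w (x - unitv i, i).
Arguments open_b {d}.
Definition open_adj (d : nat) (w : config d) (x y : vertex d) : Prop :=
  exists (i : 'I_d) (s : bool), y = nbr x i s /\ open_b w x i s.
Arguments open_adj {d}.

Fixpoint reach (d : nat) (w : config d) (n : nat) (x y : vertex d) : Prop :=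
  match n with
  | 0 => x = y
  | n'.+1 => exists z, open_adj w x z /\ reach d w n' z y
  end.
Arguments reach {d}.

Definition cluster (d : nat) (w : config d) (x : vertex d) : set (vertex d) :=
  [set y | exists n, reach w n x y].
Arguments cluster {d}.
Definition Cinf (d : nat) (w : config d) : set (vertex d) :=
  [set x | infinite_set (cluster w x)].

Arguments Cinf {d}.
Definition p_c (R : realType) (d : nat) : \bar R :=
  ereal_sup [set p%:E | p in [set p : R | 0 <= p <= 1 /\
     forall P : probability (config d) R, bernoulli_perc P p ->
       P.-negligible [set w : config d | Cinf w 0]]].

(* Chemical distance (graph distance in the open subgraph), +oo if not connected. *)
Definition chem_dist (R : realType) (d : nat) (w : config d) (x y : vertex d) : \bar R :=
  ereal_inf [set (n%:R)%:E | n in [set n | reach w n x y]].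
Arguments chem_dist R {d}.

(* Simple random walk on open edges: from x it jumps to each open neighbour
   with probability 1 / (number of open edges at x). *)
Definition degree (d : nat) (w : config d) (x : vertex d) : nat :=
  \sum_(i < d) \sum_(s : bool) (open_b w x i s : nat).
Arguments degree {d}.

(* hitp n x y = P^x_omega(H(y) = n), with H(y) = inf {n >= 0 : X_n = y}. *)
Fixpoint hitp (R : realType) (d : nat) (w : config d) (n : nat) (x y : vertex d) : R :=
  match n with
  | 0 => if x == y then 1 else 0
  | n'.+1 => if x == y then 0 else
      \sum_(i < d) \sum_(s : bool)
        ((open_b w x i s)%:R / (degree w x)%:R) * hitp R d w n' (nbr x i s) y
  end.
Arguments hitp R {d}.

Definition hit_gen (R : realType) (d : nat) (lam : R) (w : config d) (x y : vertex d) : \bar R :=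
  \sum_(n <oo) (expR (- lam * n%:R) * hitp R w n x y)%:E.
Arguments hit_gen {R d}.

Definition travel_cost (R : realType) (d : nat) (lam : R) (w : config d) (x y : vertex d) : \bar R :=
  if hit_gen lam w x y == 0%E then +oo%E else (- ln (fine (hit_gen lam w x y)))%:E.
Arguments travel_cost {R d}.

Definition toR (R : realType) (d : nat) (x : vertex d) : 'rV[R]_d := map_mx (fun z : int => z%:~R) x.
Arguments toR R {d}.
Definition norm1 (R : realType) (d : nat) (x : vertex d) : R := \sum_(i < d) `|(x 0 i)%:~R : R|.


Arguments norm1 R {d}.

Definition seminorm (R : realType) (d : nat) (f : 'rV[R]_d -> R) : Prop :=
  (forall x y, f (x + y) <= f x + f y) /\ (forall (t : R) x, f (t *: x) = `|t| * f x).
Arguments seminorm {R d}.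

Definition lyapunov_prop (R : realType) (d : nat) (P : probability (config d) R)
    (lam : R) (alpha : 'rV[R]_d -> R) : Prop :=
  {ae P, forall w : config d, Cinf w 0 ->
     forall eps : R, 0 < eps -> exists N : R, forall x : vertex d,
       Cinf w x -> N <= norm1 R x ->
       ((alpha (toR R x) - eps * norm1 R x)%:E <= travel_cost lam w 0%R x /\
        travel_cost lam w 0%R x <= (alpha (toR R x) + eps * norm1 R x)%:E)%E}.
Arguments lyapunov_prop {R d}.

Definition time_constant_prop (R : realType) (d : nat) (P : probability (config d) R)
    (mu : 'rV[R]_d -> R) : Prop :=
  forall x : vertex d, {ae P, forall w : config d, Cinf w 0 ->
     forall eps : R, 0 < eps -> exists K : nat, forall k : nat,
       (K <= k)%N -> Cinf w (x *+ k) ->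
       (((mu (toR R x) - eps) * k%:R)%:E <= chem_dist R w 0%R (x *+ k)%R /\
        chem_dist R w 0%R (x *+ k)%R <= ((mu (toR R x) + eps) * k%:R)%:E)%E}.
Arguments time_constant_prop {R d}.

Definition rate (R : realType) (d : nat) (alpha : R -> 'rV[R]_d -> R) (x : 'rV[R]_d) : \bar R :=
  ereal_sup [set (alpha lam x - lam)%:E | lam in [set lam : R | 0 <= lam]].
Arguments rate {R d}.

(* Main.v *)
Require Import Defs.
From HB Require Import structures.
From mathcomp Require Import all_boot all_order all_algebra.
From mathcomp Require Import all_classical all_reals all_analysis.
From mathcomp Require Import ring lra.
Import Order.TTheory GRing.Theory Num.Theory.
Local Open Scope classical_set_scope.
Local Open Scope ring_scope.

Lemma hitp_ge0 (R : realType) d (w : config d) n x y : 0 <= hitp R w n x y.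
Proof.
elim: n x => [|n IH] x /=; first by case: eqP.
case: eqP => // _; apply: sumr_ge0 => i _; apply: sumr_ge0 => s _.
by apply: mulr_ge0 => //; apply: divr_ge0.
Qed.

Lemma hitp_reach (R : realType) d (w : config d) n x y :
  hitp R w n x y != 0 -> reach w n x y.
Proof.
elim: n x => [|n IH] x; rewrite [hitp _ _ _ _ _]/=.
  by case: (x =P y) => // _; rewrite eqxx.
case: (x =P y) => [_|_ H]; first by rewrite eqxx.
case: (pselect (exists i s, open_b w x i s /\ hitp R w n (nbr x i s) y != 0)).
  move=> [i [s [ho hn]]]; exists (nbr x i s); split; last exact: IH.
  by exists i, s.
move=> Hno; exfalso; move/eqP: H; apply; apply: big1 => i _; apply: big1 => s _.
case Ho: (open_b w x i s); last by rewrite /= mul0r mul0r.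
have -> : hitp R w n (nbr x i s) y = 0.
  by apply/eqP; apply: contra_notT Hno => hn; exists i, s.
by rewrite mulr0.
Qed.

Lemma degree_le d (w : config d) x : (degree w x <= 2 * d)%N.
Proof.
rewrite /degree; apply: (@leq_trans (\sum_(i < d) 2)%N).
  by apply: leq_sum => i _; rewrite big_bool; case: (open_b w x i true); case: (open_b w x i false).
by rewrite sum_nat_const card_ord muln2 mul2n.
Qed.

Lemma sum_q_le1 (R : realType) d (w : config d) x :
  \sum_(i < d) \sum_(s : bool) ((open_b w x i s)%:R / (degree w x)%:R : R) <= 1.
Proof.
have -> : \sum_(i < d) \sum_(s : bool) ((open_b w x i s)%:R / (degree w x)%:R : R)
   = (degree w x)%:R / (degree w x)%:R.
  rewrite /degree natr_sum mulr_suml; apply: eq_bigr => i _.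
  by rewrite natr_sum mulr_suml.
have [->|h] := eqVneq (degree w x) 0%N; first by rewrite mul0r.
by rewrite divff // pnatr_eq0.
Qed.

Lemma hitp_sum_le1 (R : realType) d (w : config d) y N x :
  \sum_(n < N) hitp R w n x y <= 1.
Proof.
elim: N x => [|N IH] x; first by rewrite big_ord0.
rewrite big_ord_recl /=.
case: eqP => [_|_].
  by rewrite big1 ?addr0 // => i _ /=; case: eqP.
rewrite add0r.
rewrite exchange_big /=.
have HQ := sum_q_le1 R d w x.
apply: le_trans HQ.
apply: ler_sum => i _.
rewrite exchange_big /=.
apply: ler_sum => s _.
rewrite -mulr_sumr.
rewrite -[X in _ <= X]mulr1; apply: ler_wpM2l; first by apply: divr_ge0.
exact: IH.
Qed.
Lemma sum_ge_term {R : realType} {I : finType} {F : I -> R} i :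
  (forall j, 0 <= F j) -> F i <= \sum_j F j.
Proof. by move=> H; rewrite (bigD1 i) //= lerDl sumr_ge0. Qed.

Lemma hitp_min (R : realType) d (w : config d) y m x :
  reach w m x y -> (forall k, (k < m)%N -> ~ reach w k x y) ->
  ((2 * d)%:R^-1) ^+ m <= hitp R w m x y.
Proof.
elim: m x => [|m IH] x; first by move=> /= ->; rewrite eqxx expr0.
move=> [z [[i [s [-> ho]]] hr]] hmin /=.
case: eqP => [exy|_].
  by exfalso; apply: (hmin 0%N) => //.
have hz : forall k, (k < m)%N -> ~ reach w k (nbr x i s) y.
  move=> k km hk; apply: (hmin k.+1) => //.
  by exists (nbr x i s); split => //; exists i, s.
have hd : (0 < degree w x)%N.
  rewrite /degree (bigD1 i) //= (bigD1 s) //= ho.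
  by apply: ltn_addr; apply: ltn_addr.
apply: le_trans; last first.
  apply: (sum_ge_term i) => j; apply: sumr_ge0 => t _.
  by apply: mulr_ge0; [apply: divr_ge0|apply: hitp_ge0].
apply: le_trans; last first.
  apply: (sum_ge_term s) => t.
  by apply: mulr_ge0; [apply: divr_ge0|apply: hitp_ge0].
rewrite ho exprS mul1r; apply: ler_pM.
- by rewrite invr_ge0.
- by rewrite exprn_ge0 // invr_ge0.
- rewrite lef_pV2 ?ler_nat ?degree_le // posrE ltr0n //.
  by rewrite (leq_trans hd) // degree_le.
- exact: IH.
Qed.


Set Implicit Arguments. Unset Strict Implicit.

Definition minreach d (w : config d) m x y :=
  reach w m x y /\ forall k, (k < m)%N -> ~ reach w k x y.
Arguments minreach {d}.

Lemma exists_minreach d (w : config d) x y :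
  (exists n, reach w n x y) -> exists m, minreach w m x y.
Proof.
move=> [n hn].
have exP : exists n, (fun n => `[< reach w n x y >]) n by exists n; exact/asboolP.
case: (ex_minnP exP) => m Pm Hmin; exists m; split; first exact/asboolP.
move=> k km hk; have := Hmin k (asboolT hk); by rewrite leqNgt km.
Qed.

Lemma chem_min (R : realType) d (w : config d) m x y :
  minreach w m x y -> chem_dist R w x y = (m%:R)%:E.
Proof.
move=> [hr hmin]; apply/eqP; rewrite eq_le; apply/andP; split.
  by apply: ereal_inf_lbound; exists m.
apply/ereal_infP => _ [n hn <-]; rewrite lee_fin ler_nat.
by rewrite leqNgt; apply/negP => hnm; exact: (hmin n).
Qed.

Lemma chem_fin (R : realType) d (w : config d) x y :
  (chem_dist R w x y < +oo)%E -> exists n, reach w n x y.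
Proof.
move=> h; case: (pselect (exists n, reach w n x y)) => // hn; move: h; rewrite /chem_dist.
suff -> : [set (n%:R)%:E | n in [set n | reach w n x y]] = set0 :> set (\bar R).
  by rewrite ereal_inf0 ltxx.
by apply/seteqP; split => // z [n hr _]; exfalso; apply: hn; exists n.
Qed.

Lemma hit_gen_le (R : realType) d (w : config d) (lam : R) m x y :
  0 <= lam -> minreach w m x y ->
  (hit_gen lam w x y <= (expR (- lam * m%:R))%:E)%E.
Proof.
move=> hl [hr hmin]; rewrite /hit_gen.
apply: lime_le.
  by apply: is_cvg_nneseries => n _ _; rewrite lee_fin mulr_ge0 ?expR_ge0 ?hitp_ge0.
apply: nearW => N; rewrite sumEFin lee_fin.
apply: (@le_trans _ _ (\sum_(0 <= n < N) expR (- lam * m%:R) * hitp R w n x y)).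
  apply: ler_sum => n _.
  have [nm|mn] := ltnP n m.
    have -> : hitp R w n x y = 0.
      by apply: contra_notP (hmin n nm) => /eqP; exact: hitp_reach.
    by rewrite !mulr0.
  apply: ler_wpM2r; first exact: hitp_ge0.
  by rewrite ler_expR !mulNr lerN2 ler_wpM2l // ler_nat.
rewrite -mulr_sumr -[X in _ <= X]mulr1 ler_wpM2l ?expR_ge0 //.
by rewrite big_mkord; exact: hitp_sum_le1.
Qed.

Lemma tc_lower (R : realType) d (w : config d) (lam : R) m x y :
  0 <= lam -> minreach w m x y ->
  ((lam * m%:R)%:E <= travel_cost lam w x y)%E.
Proof.
move=> hl hm; rewrite /travel_cost; case: ifP => [_|/negbT H]; first by rewrite leey.
have hle := hit_gen_le hl hm.
have hge : (0 <= hit_gen lam w x y)%E.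
  by apply: nneseries_ge0 => n _ _; rewrite lee_fin mulr_ge0 ?expR_ge0 ?hitp_ge0.
have hfin : hit_gen lam w x y \is a fin_num.
  by rewrite ge0_fin_numE // (le_lt_trans hle) ?ltry.
move: H hle hge; rewrite -(fineK hfin) lee_fin eqe => H hle hge.
rewrite lee_fin lerNr /= -mulNr -(expRK (- lam * m%:R)) ler_ln ?posrE ?expR_gt0 //.
by rewrite lt_neqAle eq_sym H -lee_fin.
Qed.

Lemma tc_upper (R : realType) d (w : config d) (lam : R) m x y :
  (0 < d)%N -> 0 <= lam -> minreach w m x y ->
  (travel_cost lam w x y <= (m%:R * (lam + ln ((2 * d)%:R : R)))%:E)%E.
Proof.
move=> d0 hl hm; have [hr hmin] := hm.
have hd : (0 : R) < (2 * d)%:R by rewrite ltr0n muln_gt0.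
set c := expR (- lam * m%:R) * ((2 * d)%:R^-1) ^+ m.
have c0 : 0 < c by rewrite mulr_gt0 ?expR_gt0 // exprn_gt0 // invr_gt0.
have hge : ((c)%:E <= hit_gen lam w x y)%E.
  have hnn : forall n, (0 <= n)%N -> xpredT n ->
      (0 <= (expR (- lam * n%:R) * hitp R w n x y)%:E)%E.
    by move=> n _ _; rewrite lee_fin mulr_ge0 ?expR_ge0 ?hitp_ge0.
  apply: le_trans (nneseries_lim_ge m.+1 hnn).
  rewrite big_nat_recr //= sumEFin lee_fin -[X in X <= _]add0r; apply: lerD.
    by apply: sumr_ge0 => n _; rewrite mulr_ge0 ?expR_ge0 ?hitp_ge0.
  by apply: ler_wpM2l; [exact: expR_ge0|exact: hitp_min].
have hle := hit_gen_le hl hm.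
have hfin : hit_gen lam w x y \is a fin_num.
  by rewrite ge0_fin_numE ?(le_trans _ hge) ?lee_fin ?ltW // (le_lt_trans hle) ?ltry.
rewrite /travel_cost -(fineK hfin) eqe.
have hpos : 0 < fine (hit_gen lam w x y).
  by rewrite -lte_fin fineK // (lt_le_trans _ hge) // lte_fin.
rewrite (gt_eqF hpos) lee_fin lerNl.
have -> : - (m%:R * (lam + ln (2 * d)%:R)) = ln c.
  rewrite /c lnM ?posrE ?expR_gt0 ?exprn_gt0 ?invr_gt0 // expRK lnXn ?invr_gt0 //.
  by rewrite lnV ?posrE // mulrDr mulNrn -mulr_natl; ring.
by rewrite ler_ln ?posrE // -lee_fin fineK.
Qed.


Set Implicit Arguments. Unset Strict Implicit.

Section SN.
Context (R : realType) (d : nat) (f : 'rV[R]_d -> R) (hf : seminorm f).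

Lemma sn0 : f 0 = 0.
Proof. by have := hf.2 0 0; rewrite scale0r normr0 mul0r. Qed.

Lemma snN x : f (- x) = f x.
Proof. by have := hf.2 (-1) x; rewrite scaleN1r normrN normr1 mul1r. Qed.

Lemma sn_ge0 x : 0 <= f x.
Proof.
have := hf.1 x (- x); rewrite subrr sn0 snN => h.
by rewrite -(@pmulr_rge0 _ 2) // mulr2n mulrDl !mul1r.
Qed.

Lemma snZ (t : R) x : f (t *: x) = `|t| * f x.
Proof. exact: hf.2. Qed.

Lemma sn_sum (I : finType) (F : I -> 'rV[R]_d) : f (\sum_i F i) <= \sum_i f (F i).
Proof.
elim/big_rec2: _ => [|i y1 y2 _ h]; first by rewrite sn0.
by apply: le_trans (hf.1 _ _) _; rewrite lerD2l.
Qed.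

Lemma sn_bound x : f x <= \sum_(i < d) `|x 0 i| * f (delta_mx 0 i).
Proof.
have -> : x = \sum_(i < d) x 0 i *: delta_mx 0 i.
  by rewrite {1}[x]matrix_sum_delta big_ord1.
apply: le_trans (sn_sum _) _; apply: ler_sum => i _.
rewrite snZ ler_wpM2r ?sn_ge0 //.
have -> : (\sum_(j < d) x 0 j *: (delta_mx 0 j : 'rV[R]_d)) 0 i = x 0 i.
  rewrite summxE (bigD1 i) //= !mxE !eqxx mulr1 big1 ?addr0 // => j hj.
  by rewrite !mxE eq_sym (negbTE hj) andbF mulr0.
by [].
Qed.

End SN.

Lemma le_of_n (R : realType) (a b K : R) : 0 <= K ->
  (forall n : nat, a <= b + K / n.+1%:R) -> a <= b.
Proof.
move=> K0 H; apply/ler_addgt0Pr => e e0.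
have hn := archi_boundP (divr_ge0 K0 (ltW e0)).
apply: le_trans (H (Num.Def.archi_bound (K / e))) _; rewrite lerD2l.
rewrite ler_pdivrMr ?ltr0n // mulrC -ler_pdivrMr //.
by apply: ltW; apply: lt_le_trans hn _; rewrite ler_nat.
Qed.

Lemma extend (R : realType) d (f g : 'rV[R]_d -> R) (c : R) :
  seminorm f -> seminorm g -> 0 <= c ->
  (forall z : vertex d, f (toR R z) <= c * g (toR R z)) -> forall x, f x <= c * g x.
Proof.
move=> hf hg c0 H x.
set Cf := \sum_(i < d) f (delta_mx 0 i).
set Cg := \sum_(i < d) g (delta_mx 0 i).
have Cf0 : 0 <= Cf by apply: sumr_ge0 => i _; exact: sn_ge0.
have Cg0 : 0 <= Cg by apply: sumr_ge0 => i _; exact: sn_ge0.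
apply: (@le_of_n _ _ _ (c * Cg + Cf)); first by rewrite addr_ge0 ?mulr_ge0.
move=> n; set N : R := n.+1%:R.
have N0 : 0 < N by rewrite ltr0n.
pose z : vertex d := \row_i Num.floor (N * x 0 i).
set v := x - N^-1 *: toR R z.
have hv : forall h, seminorm h -> h v <= (\sum_(i < d) h (delta_mx 0 i)) / N.
  move=> h hh; apply: le_trans (sn_bound hh v) _.
  rewrite mulr_suml; apply: ler_sum => i _.
  rewrite mulrC ler_wpM2l ?sn_ge0 //.
  have -> : v 0 i = (N * x 0 i - (Num.floor (N * x 0 i))%:~R) / N.
    rewrite /v !mxE mulrBl mulrAC divff ?gt_eqF // mul1r mulrC.
    by [].
  have := floor_itv (N * x 0 i); case/andP => h1 h2.
  rewrite normrM (gtr0_norm (x := N^-1)) ?invr_gt0 //.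
  rewrite -[X in _ <= X]mul1r ler_pM2r ?invr_gt0 //.
  rewrite ger0_norm ?subr_ge0 //.
  by move: h2; rewrite intrD => h2; lra.
have ex : x = N^-1 *: toR R z + v by rewrite /v addrC subrK.
have hg1 : N^-1 * g (toR R z) <= g x + Cg / N.
  have -> : N^-1 * g (toR R z) = g (N^-1 *: toR R z).
    by rewrite (snZ hg) ger0_norm // invr_ge0 ltW.
  have -> : N^-1 *: toR R z = x - v by rewrite {1}ex addrK.
  by apply: le_trans (hg.1 _ _) _; rewrite (snN hg) lerD2l hv.
rewrite {1}ex; have h1 := proj1 hf (N^-1 *: toR R z) v. apply: (le_trans h1).
have hN : 0 <= N^-1 by rewrite invr_ge0 ltW.
rewrite (snZ hf) (ger0_norm hN).
apply: le_trans (lerD (ler_wpM2l hN (H z)) (hv f hf)) _.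
rewrite mulrCA.
apply: le_trans (lerD (ler_wpM2l c0 hg1) (lexx _)) _.
by rewrite mulrDr mulrDl mulrA addrA.
Qed.


Set Implicit Arguments. Unset Strict Implicit.

Definition Cyl d (s : seq (edge d)) (b : edge d -> bool) : set (config d) :=
  [set w : config d | forall e, e \in s -> w e = b e].

Lemma cyl1_meas d (e : edge d) (b : bool) :
  measurable [set w : config d | w e = b].
Proof. by apply: sub_sigma_algebra; exists e, b. Qed.

Lemma Cyl_meas d s b : measurable (@Cyl d s b).
Proof.
elim: s => [|e s IH].
  by rewrite (_ : Cyl _ _ = setT) //; apply/seteqP; split => // w _ e.
rewrite (_ : Cyl _ _ = [set w : config d | w e = b e] `&` Cyl s b).
  exact: measurableI (cyl1_meas _ _) IH.
apply/seteqP; split => w.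
  by move=> h; split; [apply: h; rewrite inE eqxx|move=> e' he'; apply: h; rewrite inE he' orbT].
by move=> [h1 h2] e'; rewrite inE => /orP[/eqP->//|]; exact: h2.
Qed.

Lemma Cyl_undup d s b : @Cyl d (undup s) b = Cyl s b.
Proof. by apply/seteqP; split => w h e he; apply: h; rewrite ?mem_undup in he *. Qed.

Definition CG d : set (set (config d)) :=
  [set A | A = set0 \/ exists s b, A = @Cyl d s b].

Lemma CG_gen d : (measurable : set (set (config d))) = <<s @CG d >>.
Proof.
apply/seteqP; split.
  apply: smallest_sub; first exact: smallest_sigma_algebra.
  move=> _ [e [b ->]]; apply: sub_sigma_algebra; right.
  exists [:: e], (fun _ => b); apply/seteqP; split => w.
    by move=> h e'; rewrite inE => /eqP ->.
  by move=> h; apply: h; rewrite inE.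
apply: smallest_sub; first exact: smallest_sigma_algebra.
by move=> _ [->|[s [b ->]]]; [exact: measurable0|exact: Cyl_meas].
Qed.

Lemma CG_setI d : setI_closed (@CG d).
Proof.
move=> A B [->|[s [b ->]]]; first by left; rewrite set0I.
move=> [->|[s' [b' ->]]]; first by left; rewrite setI0.
case: (pselect (exists e, e \in s /\ e \in s' /\ b e <> b' e)).
  move=> [e [h1 [h2 h3]]]; left; apply/seteqP; split => // w [/(_ e h1) ha /(_ e h2) hb].
  by apply: h3; rewrite -ha -hb.
move=> hno; right; exists (s ++ s'), (fun e => if e \in s then b e else b' e).
apply/seteqP; split => w.
  move=> [h1 h2] e; rewrite mem_cat => /orP[he|he]; first by rewrite he; exact: h1.
  by case: ifP => hs; [exact: h1|exact: h2].
move=> h; split => e he; first by have := h e; rewrite mem_cat he /=; apply.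
have := h e; rewrite mem_cat he orbT => /(_ isT).
case: ifP => // hs ->; case: (b e =P b' e) => // hne; exfalso; apply: hno.
by exists e.
Qed.

Lemma bern_cyl (R : realType) d (P : probability (config d) R) p s b :
  bernoulli_perc P p ->
  P (Cyl s b) = (\prod_(e <- undup s) (if b e then p else 1 - p))%:E.
Proof. by move=> h; rewrite -Cyl_undup h ?undup_uniq. Qed.

Lemma bern_unique (R : realType) d (P1 P2 : probability (config d) R) p :
  bernoulli_perc P1 p -> bernoulli_perc P2 p ->
  forall A, measurable A -> P1 A = P2 A.
Proof.
move=> h1 h2 A mA.
apply: (measure_unique (@CG d) (fun _ => setT)) => //.
- exact: CG_gen.
- exact: CG_setI.
- move=> _; right; exists [::], (fun _ => true); apply/seteqP; split => // w _ e.
- by apply/seteqP; split => // w _; exists 0%N.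
- move=> B [->|[s [b ->]]]; rewrite ?measure0 //.
  exact: (etrans (bern_cyl s b h1) (esym (bern_cyl s b h2))).
- move=> _; apply: (le_lt_trans (probability_le1 P1 _)); [exact: measurableT|exact: ltry].
Qed.

Definition shift d (u : vertex d) (w : config d) : config d :=
  fun e => w (e.1 + u, e.2).

Lemma shift_meas d (u : vertex d) : measurable_fun setT (shift u).
Proof.
apply: (@measurability _ _ (config d) (config d) setT (shift u) (cylinders d)); first by [].
move=> _ [_ [e [b ->]] <-]; rewrite setTI.
exact: (cyl1_meas (e.1 + u, e.2) b).
Qed.

Lemma cyl_unique (R : realType) d (m1 m2 : {measure set (config d) -> \bar R}) :
  (m1 setT < +oo)%E -> (forall s b, uniq s -> m1 (@Cyl d s b) = m2 (Cyl s b)) ->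
  forall A, measurable A -> m1 A = m2 A.
Proof.
move=> hT h A mA.
apply: (measure_unique (@CG d) (fun _ => setT)) => //.
- exact: CG_gen.
- exact: CG_setI.
- move=> _; right; exists [::], (fun _ => true); apply/seteqP; split => // w _ e.
- by apply/seteqP; split => // w _; exists 0%N.
- move=> B [->|[s [b ->]]]; rewrite ?measure0 //.
  by rewrite -Cyl_undup; apply: h; exact: undup_uniq.
Qed.

Lemma shift_inv (R : realType) d (P : probability (config d) R) p (u : vertex d) :
  bernoulli_perc P p -> forall A, measurable A -> P (shift u @^-1` A) = P A.
Proof.
move=> hb A mA.
have mf := shift_meas u.
pose m2' : {measure set (config d) -> \bar R} := pushforward P (shift u).
pose m2 := m2' mf.
suff : P A = m2 A by move=> ->.
apply: cyl_unique => //.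
  by apply: (le_lt_trans (probability_le1 P _)); [exact: measurableT|exact: ltry].
move=> s b us.
pose sh := fun e : edge d => (e.1 + u, e.2).
have ush : injective sh.
  by move=> [x i] [y j] /= [/addIr -> ->].
have -> : m2 (Cyl s b) = P (Cyl (map sh s) (fun e => b (e.1 - u, e.2))).
  rewrite /m2 /pushforward; congr (P _); apply/seteqP; split => w /=.
    move=> h _ /mapP [e he ->] /=; rewrite addrK; have := h e he.
    by rewrite /shift; case: e he.
  move=> h e he; rewrite /shift; have := h (sh e) (map_f sh he).
  by rewrite /sh /= addrK; case: e he.
apply: (etrans (hb s b us)); apply: esym.
have us' : uniq (map sh s) by rewrite map_inj_uniq.
apply: (etrans (hb _ _ us')); congr (_%:E); rewrite big_map; apply: eq_bigr => e _.
by rewrite /sh /= addrK; case: e.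
Qed.

Lemma open_b_shift d (w : config d) u x i s :
  open_b (shift u w) x i s = open_b w (x + u) i s.
Proof. by case: s => //=; rewrite /shift /= addrAC. Qed.

Lemma nbr_shift d (x u : vertex d) i s : nbr (x + u) i s = nbr x i s + u.
Proof. by case: s; rewrite /nbr addrAC. Qed.

Lemma reach_shift d (w : config d) u n : forall x y,
  reach (shift u w) n x y <-> reach w n (x + u) (y + u).
Proof.
elim: n => [|n IH] x y /=.
  by split => [->//|/addIr].
split.
  move=> [z [[i [s [-> ho]]] hr]]; exists (nbr x i s + u); split.
    by exists i, s; rewrite nbr_shift -open_b_shift.
  exact/IH.
move=> [z [[i [s [-> ho]]] hr]]; exists (nbr x i s); split.
  by exists i, s; rewrite open_b_shift.
by apply/IH; rewrite -nbr_shift.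
Qed.

Lemma inf_char (T : eqType) (S : set T) :
  infinite_set S <-> forall L : seq T, exists y, S y /\ y \notin L.
Proof.
split.
  move=> hS L; case: (pselect (exists y, S y /\ y \notin L)) => // hno.
  exfalso; apply: hS; apply: (@sub_finite_set _ _ [set` L]).
    move=> y Sy; case: (boolP (y \in L)) => // hy; exfalso; apply: hno; by exists y.
  by apply/finite_seqP; exists L.
move=> h /finite_seqP [L hL]; have [y [Sy hy]] := h L.
by move: Sy; rewrite hL /= (negbTE hy).
Qed.

Lemma Cinf_shift d (w : config d) u x : Cinf (shift u w) x <-> Cinf w (x + u).
Proof.
rewrite /Cinf /= !inf_char; split => h L.
  have [y [[n hy] hyL]] := h (map (fun y => y - u) L).
  exists (y + u); split; first by exists n; apply/reach_shift.
  apply: contra hyL => hL; apply/mapP; exists (y + u) => //; by rewrite addrK.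
have [y [[n hy] hyL]] := h (map (fun y => y + u) L).
exists (y - u); split.
  by exists n; apply/reach_shift; rewrite subrK.
apply: contra hyL => hL; apply/mapP; exists (y - u) => //; by rewrite subrK.
Qed.

Lemma open_meas d (x : vertex d) i s : measurable [set w : config d | open_b w x i s].
Proof.
case: s => /=; first exact: (cyl1_meas (x, i) true).
exact: (cyl1_meas (x - unitv i, i) true).
Qed.

Lemma reach_meas d n : forall x y : vertex d, measurable [set w : config d | reach w n x y].
Proof.
elim: n => [|n IH] x y /=.
  have [->|h] := eqVneq x y.
    by rewrite (_ : [set _ | y = y] = setT) //; apply/seteqP; split.
  rewrite (_ : [set _ | x = y] = set0) //; apply/seteqP; split => // w /eqP.
  by rewrite (negbTE h).
rewrite (_ : [set w : config d | exists z, open_adj w x z /\ reach w n z y] =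
  \bigcup_(i : 'I_d) \bigcup_(s : bool)
     ([set w : config d | open_b w x i s] `&` [set w | reach w n (nbr x i s) y])).
  apply: countable_bigcupT_measurable; first exact: countableP.
  move=> i; apply: countable_bigcupT_measurable; first exact: countableP.
  by move=> s; apply: measurableI; [exact: open_meas|exact: IH].
apply/seteqP; split => w.
  by move=> [z [[i [s [-> ho]]] hr]]; exists i => //; exists s.
by move=> [i _ [s _ [ho hr]]]; exists (nbr x i s); split => //; exists i, s.
Qed.

Lemma Cinf_meas d (x : vertex d) : measurable [set w : config d | Cinf w x].
Proof.
rewrite (_ : [set w : config d | Cinf w x] =
  \bigcap_(L : seq (vertex d)) \bigcup_(y : vertex d) \bigcup_(n : nat)
     (if y \in L then set0 else [set w : config d | reach w n x y])).
  rewrite -[X in measurable X]setCK setC_bigcap; apply: measurableC.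
  apply: countable_bigcupT_measurable; first exact: countableP.
  move=> L; apply: measurableC.
  apply: countable_bigcupT_measurable; first exact: countableP.
  move=> y; apply: countable_bigcupT_measurable; first exact: countableP.
  by move=> n; case: ifP => _; [exact: measurable0|exact: reach_meas].
apply/seteqP; split => w.
  rewrite /Cinf /= inf_char => h L _; have [y [[n hy] hyL]] := h L.
  by exists y => //; exists n => //; rewrite (negbTE hyL).
move=> h; rewrite /Cinf /= inf_char => L; have [y _ [n _]] := h L I.
by case: ifP => // hyL hr; exists y; split; [exists n|rewrite hyL].
Qed.

Lemma key (R : realType) d (P : probability (config d) R) p (z : vertex d) :
  bernoulli_perc P p -> ~ P.-negligible [set w : config d | Cinf w 0] ->
  ~ P.-negligible [set w : config d | Cinf w 0 /\
       forall n, exists2 k, (n <= k)%N & Cinf w (z *+ k)].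
Proof.
move=> hb hneg.
pose A := fun k : nat => [set w : config d | Cinf w (z *+ k)].
have mA k : measurable (A k) by exact: Cinf_meas.
have A0E : A 0%N = [set w : config d | Cinf w 0] by rewrite /A mulr0n.
have Ash k j : A (k + j)%N = shift (z *+ j) @^-1` A k.
  apply/seteqP; split => w /=; rewrite /A /= Cinf_shift mulrnDr //.
have PA k : P (A k) = P (A 0%N).
  by rewrite -[k]add0n Ash (shift_inv _ hb) // mA.
have th : (0 < P (A 0%N))%E.
  rewrite lt0e measure_ge0 andbT; apply/eqP => h0; apply: hneg.
  by rewrite -A0E; exists (A 0%N); split.
pose B := lim_sup_set A.
have mB : measurable B.
  apply: bigcap_measurable; first by exists 0%N.
  by move=> n _; apply: bigcup_measurable => k _; exact: mA.
have PB : (P (A 0%N) <= P B)%E.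
  have hfin : (P (\bigcup_(k >= 0) A k) < +oo)%E.
    apply: (le_lt_trans (probability_le1 P _)); last exact: ltry.
    by apply: bigcup_measurable => k _; exact: mA.
  have hc := lim_sup_set_cvg P A mA hfin.
  rewrite -(cvg_lim _ hc) //; apply: lime_ge; first by apply/cvg_ex; eexists; exact: hc.
  apply: nearW => n; rewrite -(PA n); apply: le_measure; rewrite ?inE //.
  - by apply: bigcup_measurable => k _; exact: mA.
  - by move=> w hw; exists n => //=.
move=> [N [mN PN0 sub]].
have sB : B `<=` \bigcup_j (shift (z *+ j) @^-1` N).
  move=> w hw; have [j _ hj] := hw 0%N I.
  exists j => //; apply: sub; split.
    by rewrite /= Cinf_shift add0r.
  move=> n; have [k hk hAk] := hw (n + j)%N I.
  exists (k - j)%N; first by rewrite leq_subRL ?(leq_trans (leq_addl n j)) // addnC.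
  have e : z *+ k = z *+ (k - j) + z *+ j.
    by rewrite -mulrnDr subnK // (leq_trans (leq_addl n j) hk).
  by apply/Cinf_shift; rewrite -e.
have hB : P.-negligible B.
  apply: (negligibleS sB); apply: negligible_bigcup => j.
  exists (shift (z *+ j) @^-1` N); split => //.
    by rewrite -[X in measurable X]setTI; exact: shift_meas.
  by move: (shift_inv (z *+ j) hb mN); rewrite PN0; exact.
have [N' [mN' PN'0 sub']] := hB.
have : (P B <= P N')%E by apply: le_measure; rewrite ?inE.
rewrite PN'0 => hle.
by have := lt_le_trans th (le_trans PB hle); rewrite ltxx.
Qed.

Lemma p_ge0 (R : realType) d (P : probability (config d) R) p :
  (0 < d)%N -> bernoulli_perc P p -> 0 <= p.
Proof.
move=> d0 hb.
pose e : edge d := (0, Ordinal d0).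
have h := hb [:: e] (fun _ => true) isT.
have h2 : (0 <= P [set w : config d | forall e0, e0 \in [:: e] -> w e0 = true])%E.
  exact: measure_ge0.
by move: h2; rewrite h big_seq1 lee_fin.
Qed.

Lemma A0_nonneg (R : realType) d (P : probability (config d) R) p :
  (0 < d)%N -> (p_c R d < p%:E)%E -> p <= 1 -> bernoulli_perc P p ->
  ~ P.-negligible [set w : config d | Cinf w 0].
Proof.
move=> d0 hpc hp1 hb hneg.
have p0 := p_ge0 d0 hb.
have : (p%:E <= p_c R d)%E.
  apply: ereal_sup_ubound; exists p => //; split; first by rewrite p0 hp1.
  move=> P' hb'; have [N [mN PN sub]] := hneg; exists N; split => //.
  by move: (bern_unique hb' hb mN) => ->.
by rewrite leNgt hpc.
Qed.

Lemma good_omega (R : realType) d (P : probability (config d) R) p (z : vertex d)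
    (Q1 Q2 : config d -> Prop) :
  (0 < d)%N -> (p_c R d < p%:E)%E -> p <= 1 -> bernoulli_perc P p ->
  {ae P, forall w, Q1 w} -> {ae P, forall w, Q2 w} ->
  exists w : config d, [/\ Cinf w 0, (forall n, exists2 k, (n <= k)%N & Cinf w (z *+ k)),
     Q1 w & Q2 w].
Proof.
move=> d0 hpc hp1 hb h1 h2.
have hk := key (z := z) hb (A0_nonneg d0 hpc hp1 hb).
case: (pselect (exists w : config d, [/\ Cinf w 0,
   (forall n, exists2 k, (n <= k)%N & Cinf w (z *+ k)), Q1 w & Q2 w])) => // hno.
exfalso; apply: hk; apply: (negligibleS _ (negligibleU h1 h2)).
move=> w [hw1 hw2] /=.
case: (pselect (Q1 w)) => hq1; last by left.
case: (pselect (Q2 w)) => hq2; last by right.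
by exfalso; apply: hno; exists w.
Qed.


Set Implicit Arguments. Unset Strict Implicit.
Lemma toR_Mn (R : realType) d (z : vertex d) k : toR R (z *+ k) = k%:R *: toR R z.
Proof. apply/rowP => i; rewrite !mxE mulmxnE mulr_natl. exact: raddfMn. Qed.
Lemma norm1_Mn (R : realType) d (z : vertex d) k : norm1 R (z *+ k) = k%:R * norm1 R z.
Proof. rewrite /norm1 mulr_sumr; apply: eq_bigr => i _.
rewrite mulmxnE raddfMn normrMn mulr_natl //. Qed.
Lemma toR0 (R : realType) d : toR R (0 : vertex d) = 0.
Proof. by apply/rowP => i; rewrite !mxE. Qed.
Lemma norm1E (R : realType) d (z : vertex d) :
  norm1 R z = \sum_(i < d) `|(z 0 i)%:~R : R|.
Proof. by []. Qed.

Lemma norm1_ge1 (R : realType) d (z : vertex d) : z != 0 -> 1 <= norm1 R z.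
Proof.
move=> hz; have [i hi] : exists i, z 0 i != 0.
  case: (pselect (exists i, z 0 i != 0)) => // hn; exfalso; move/eqP: hz; apply.
  apply/rowP => i; rewrite mxE; apply/eqP; apply: contra_notT hn => h; by exists i.
rewrite norm1E (bigD1 i) //=.
have h1 : (1:R) <= `|(z 0 i)%:~R| by rewrite -intr_norm ler1z -gtz0_ge1 normr_gt0.
have h2 : 0 <= \sum_(j < d | j != i) `|(z 0 j)%:~R : R| by apply: sumr_ge0.
lra.
Qed.

Lemma lattice_bounds (R : realType) d (p : R) (P : probability (config d) R)
    (alpha : R -> 'rV[R]_d -> R) (mu : 'rV[R]_d -> R) (lam : R) (z : vertex d) :
  (2 <= d)%N -> (p_c R d < p%:E)%E -> p <= 1 -> bernoulli_perc P p -> 0 <= lam ->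
  seminorm (alpha lam) -> lyapunov_prop P lam (alpha lam) -> seminorm mu ->
  time_constant_prop P mu ->
  alpha lam (toR R z) <= mu (toR R z) * (lam + ln ((2 * d)%:R : R)) /\
  lam * mu (toR R z) <= alpha lam (toR R z).
Proof.
move=> hd hpc hp1 hb hl ha hly hm htc.
set L := ln ((2 * d)%:R : R).
have d0 : (0 < d)%N by apply: leq_trans hd.
have L0 : 0 <= L by rewrite ln_ge0 // ler1n muln_gt0.
have [->|hz] := eqVneq z 0.
  by rewrite toR0 (sn0 ha) (sn0 hm) mul0r mulr0.
have [w [hw0 hio hq1 hq2]] := good_omega z d0 hpc hp1 hb hly (htc z).
set a := alpha lam (toR R z); set b := mu (toR R z); set c := norm1 R z.
have c1 : 1 <= c := norm1_ge1 R hz.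
have main : forall e, 0 < e ->
    a <= b * (lam + L) + e * (c + lam + L) /\ lam * b <= a + e * (lam + c).
  move=> e e0.
  have [N hN] := hq1 hw0 e e0.
  have [K hK] := hq2 hw0 e e0.
  have [k hk hCk] := hio (maxn (maxn K (Num.Def.archi_bound `|N|)) 1).
  have hKk : (K <= k)%N.
    by apply: leq_trans hk; apply: leq_trans (leq_maxl _ _); exact: leq_maxl.
  have hk1 : (1 <= k)%N by apply: leq_trans hk; exact: leq_maxr.
  have hbk : (Num.Def.archi_bound `|N| <= k)%N.
    by apply: leq_trans hk; apply: leq_trans (leq_maxl _ _); exact: leq_maxr.
  have K0 : (0 : R) < k%:R by rewrite ltr0n.
  have hNk : N <= norm1 R (z *+ k).
    rewrite norm1_Mn; apply: le_trans (ler_norm N) _; apply: ltW.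
    apply: (lt_le_trans (archi_boundP (normr_ge0 N))).
    apply: (@le_trans _ _ (k%:R)); first by rewrite ler_nat.
    by rewrite -[X in X <= _]mulr1 ler_wpM2l ?ler0n.
  have [h1 h2] := hN _ hCk hNk.
  have [h3 h4] := hK k hKk hCk.
  have [n hr] := chem_fin (le_lt_trans h4 (ltry _)).
  have [m hmr] := exists_minreach (ex_intro _ n hr).
  have ecd : chem_dist R w 0 (z *+ k) = (m%:R)%:E := chem_min R hmr.
  rewrite ecd lee_fin in h3 h4.
  have h5 := tc_lower hl hmr.
  have h6 := tc_upper d0 hl hmr.
  have i1 := le_trans h1 h6; have i2 := le_trans h5 h2.
  rewrite lee_fin toR_Mn (snZ ha) norm1_Mn ger0_norm ?ler0n // -/a -/c in i1.
  rewrite lee_fin toR_Mn (snZ ha) norm1_Mn ger0_norm ?ler0n // -/a -/c in i2.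
  rewrite -/b in h3 h4.
  have hLl : 0 <= lam + L by rewrite addr_ge0.
  have h4' : m%:R * (lam + L) <= (b + e) * k%:R * (lam + L) by rewrite ler_wpM2r.
  have h3' : lam * ((b - e) * k%:R) <= lam * m%:R by rewrite ler_wpM2l.
  split.
    have : k%:R * (a - e * c) <= k%:R * ((b + e) * (lam + L)).
      rewrite -/L in i1; move: i1 h4'; clear; move=> i1 h4'; nra.
    rewrite ler_pM2l // => h; lra.
  have : k%:R * (lam * (b - e)) <= k%:R * (a + e * c).
    move: i2 h3'; clear; move=> i2 h3'; nra.
  rewrite ler_pM2l // => h; nra.
split.
  apply: (@le_of_n _ _ _ (c + lam + L)); first by rewrite !addr_ge0 // (le_trans _ c1).
  move=> n; have := (main (n.+1%:R^-1) _).1; rewrite invr_gt0 ltr0n => /(_ isT).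
  by move=> h; apply: (le_trans h); rewrite [X in _ + X]mulrC.
apply: (@le_of_n _ _ _ (lam + c)); first by rewrite !addr_ge0 // (le_trans _ c1).
move=> n; have := (main (n.+1%:R^-1) _).2; rewrite invr_gt0 ltr0n => /(_ isT).
by move=> h; apply: (le_trans h); rewrite [X in _ + X]mulrC.
Qed.

Unset Implicit Arguments.
Theorem mainTheorem12 (R : realType) (d : nat) (p : R)
    (P : probability (config d) R)
    (alpha : R -> 'rV[R]_d -> R) (mu : 'rV[R]_d -> R) :
  (2 <= d)%N ->
  (p_c R d < p%:E)%E -> p <= 1 ->
  bernoulli_perc P p ->
  (forall lam : R, 0 <= lam -> seminorm (alpha lam)) ->
  (forall lam : R, 0 <= lam -> lyapunov_prop P lam (alpha lam)) ->
  seminorm mu ->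
  time_constant_prop P mu ->
  [set x : 'rV[R]_d | (rate alpha x < +oo)%E] = [set x : 'rV[R]_d | mu x <= 1]
  /\ (forall x : 'rV[R]_d, (rate alpha x < +oo)%E ->
        (rate alpha x <= (ln ((2 * d)%:R : R))%:E)%E).
Proof.
move=> hd hpc hp1 hb ha hly hm htc.
set L := ln ((2 * d)%:R : R).
have d0 : (0 < d)%N by apply: leq_trans hd.
have L0 : 0 <= L by rewrite ln_ge0 // ler1n muln_gt0.
have U : forall lam x, 0 <= lam -> alpha lam x <= (lam + L) * mu x.
  move=> lam x hl; apply: extend => //; [exact: ha|exact: addr_ge0|].
  move=> z; rewrite mulrC.
  exact: (lattice_bounds z hd hpc hp1 hb hl (ha lam hl) (hly lam hl) hm htc).1.
have Lo : forall lam x, 0 <= lam -> lam * mu x <= alpha lam x.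
  move=> lam x hl; have [->|hl0] := eqVneq lam 0.
    by rewrite mul0r (sn_ge0 (ha 0 (lexx 0))).
  have lp : 0 < lam by rewrite lt_neqAle eq_sym hl0 hl.
  have hi : 0 <= lam^-1 by rewrite invr_ge0.
  have H := @extend R d mu (alpha lam) (lam^-1) hm (ha lam hl) hi.
  have : mu x <= lam^-1 * alpha lam x.
    apply: H => z.
    have h := (lattice_bounds z hd hpc hp1 hb hl (ha lam hl) (hly lam hl) hm htc).2.
    apply: le_trans (ler_wpM2l hi h); rewrite mulrA mulVf ?mul1r //.
  move=> h; apply: le_trans (ler_wpM2l hl h) _.
  by rewrite mulrA mulfV ?mul1r // gt_eqF.
have rate_le : forall x, mu x <= 1 -> (rate alpha x <= L%:E)%E.
  move=> x hx; apply: ge_ereal_sup => _ [lam hl <-]; rewrite lee_fin.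
  have h1 := U lam x hl; have h2 := sn_ge0 hm x.
  have h3 : (lam + L) * mu x <= lam + L.
    by rewrite -[X in _ <= X]mulr1 ler_wpM2l // addr_ge0.
  have h4 := le_trans h1 h3; move: h4; rewrite /L; clear => h4; lra.
have rate_ge : forall x lam, 0 <= lam -> ((alpha lam x - lam)%:E <= rate alpha x)%E.
  by move=> x lam hl; apply: ereal_sup_ubound; exists lam.
have part1 : [set x : 'rV[R]_d | (rate alpha x < +oo)%E] = [set x : 'rV[R]_d | mu x <= 1].
  apply/seteqP; split => x /=; last first.
    by move=> hx; apply: le_lt_trans (rate_le x hx) (ltry _).
  move=> hlt; rewrite leNgt; apply/negP => hgt.
  have hge0 := rate_ge x 0 (lexx 0).
  move: hlt hge0; case E: (rate alpha x) => [r| |] // _ hr0.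
  set lam := (`|r| + 1) / (mu x - 1).
  have m1 : 0 < mu x - 1 by rewrite subr_gt0.
  have hl : 0 <= lam by rewrite /lam divr_ge0 // ?ltW // addr_ge0.
  have := rate_ge x lam hl; rewrite E lee_fin => h.
  have h2 := Lo lam x hl.
  have e : lam * (mu x - 1) = `|r| + 1 by rewrite /lam divfK // gt_eqF.
  have hr := ler_norm r.
  move: h h2 e hr; clear => h h2 e hr; nra.
split => // x hx; apply: rate_le.
by have : [set x : 'rV[R]_d | (rate alpha x < +oo)%E] x by []; rewrite part1.
Qed.
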